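(* Let $d\ge 2$ and $n\ge 1$ be integers and let $G=(E,D,\partial D)$ be the $d$-dimensional hypercubic lattice graph described in the context. If $\gamma,\gamma':E\to(0,\infty)$ are two conductivities with equal Dirichlet-to-Neumann matrices, $\Lambda_\gamma=\Lambda_{\gamma'}$, then $\gamma=\gamma'$ on every edge of $E$.
   Context: $D=\{x\in\mathbb Z^d: 1\le x_i\le n \text{ for all } i\}$ and $\partial D=\{p\in\mathbb Z^d:\min_{q\in D}\|q-p\|_{\ell^1}=1\}$ (the points with exactly one coordinate in $\{0,n+1\}$ and all others in $\{1,\dots,n\}$). $E$ is the set of unordered pairs $pq=\{p,q\}\subseteq D\cup\partial D$ with $\|p-q\|_{\ell^1}=1$ and $\{p,q\}\not\subseteq\partial D$. Write $\mathcal N(p)=\{q:pq\in E\}$; each $b\in\partial D$ has exactly one neighbour $q_b$, and $q_b\in D$. A conductivity is a map $\gamma:E\to(0,\infty)$, $\gamma_{pq}=\gamma_{qp}$. For $\mathbf u\in\mathbb R^{D\cup\partial D}$ set $(\Delta_\gamma\mathbf u)_p=\sum_{q\in\mathcal N(p)}\gamma_{pq}(\mathbf u_q-\mathbf u_p)$ for $p\in D$. For every $\varphi\in\mathbb R^{\partial D}$ there is a unique $\mathbf u$ with $\Delta_\gamma\mathbf u=0$ on $D$ and $\mathbf u=\varphi$ on $\partial D$; write $S_\gamma\varphi=\mathbf u$. The boundary current is $(D_\gamma\mathbf u)_b=\gamma_{bq_b}(\mathbf u_{q_b}-\mathbf u_b)$ for $b\in\partial D$, and the DtN matrix is $\Lambda_\gamma=D_\gamma\circ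 S_\gamma:\mathbb R^{\partial D}\to\mathbb R^{\partial D}$. *)

(* Defs.v *)
From HB Require Import structures.
From mathcomp Require Import all_boot all_order all_algebra.
From mathcomp Require Import reals.
From Stdlib Require Import ClassicalEpsilon.
Set Implicit Arguments. Unset Strict Implicit. Unset Printing Implicit Defensive.
Import Order.TTheory GRing.Theory Num.Theory.
Local Open Scope ring_scope.

(* Lattice points with all coordinates in {0,...,n+1}: every point of
   D ∪ ∂D lives here (and every lattice point at l1-distance 1 from
   D ∪ ∂D that itself lies in D ∪ ∂D). *)
Definition pt (d n : nat) := {ffun 'I_d -> 'I_n.+2}.

Section Grid.
Variables (d n : nat).

Definition extreme (c : 'I_n.+2) : bool := (c == 0 :> nat) || (c == n.+1 :> nat).

Definition inD (p : pt d n) : bool := [forall i, ~~ extreme (p i)].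

Definition inBd (p : pt d n) : bool := #|[set i | extreme (p i)]| == 1%N.

Definition inV (p : pt d n) : bool := inD p || inBd p.

Definition l1dist (p q : pt d n) : nat :=
  (\sum_(i < d) ((p i - q i) + (q i - p i)))%N.

Definition edge (p q : pt d n) : bool :=
  [&& inV p, inV q, l1dist p q == 1%N & ~~ (inBd p && inBd q)].

Variable R : realType.

(* a conductivity: positive on edges, symmetric (gamma_pq = gamma_qp);
   values off E are irrelevant *)
Definition conductivity (g : pt d n -> pt d n -> R) : Prop :=
  (forall p q, edge p q -> 0 < g p q) /\ (forall p q, edge p q -> g p q = g q p).

Definition lap (g : pt d n -> pt d n -> R) (u : pt d n -> R) (p : pt d n) : R :=
  \sum_(q | edge p q) g p q * (u q - u p).

Definition dirichlet_sol (g : pt d n -> pt d n -> R) (phi : pt d n -> R)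
  (u : pt d n -> R) : Prop :=
  (forall p, inD p -> lap g u p = 0) /\ (forall b, inBd b -> u b = phi b).

Definition Sol (g : pt d n -> pt d n -> R) (phi : pt d n -> R) : pt d n -> R :=
  epsilon (inhabits (fun _ => 0)) (dirichlet_sol g phi).

Definition current (g : pt d n -> pt d n -> R) (u : pt d n -> R) (b : pt d n) : R :=
  if [pick q | edge b q] is Some q then g b q * (u q - u b) else 0.

(* Dirichlet-to-Neumann map Lambda_gamma = D_gamma o S_gamma; only the
   values of phi on ∂D and of the output on ∂D are meaningful *)
Definition DtN (g : pt d n -> pt d n -> R) (phi : pt d n -> R) : pt d n -> R :=
  current g (Sol g phi).

End Grid.

(* Main.v *)
Require Import Defs.
From HB Require Import structures.
From mathcomp Require Import all_boot all_order all_algebra.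
From mathcomp Require Import reals.
From mathcomp Require Import zify ring lra.
From Stdlib Require Import ClassicalEpsilon.
Set Implicit Arguments. Unset Strict Implicit. Unset Printing Implicit Defensive.
Import Order.TTheory GRing.Theory Num.Theory.

Section Basics.
Variables d n : nat.
Local Notation pt := (pt d n).

Definition mv (p : pt) (j : 'I_d) (k : nat) : pt :=
  [ffun o => if o == j then inord k else p o].

Lemma mv_j (p : pt) j k : (k <= n.+1)%N -> (mv p j k j : nat) = k.
Proof. by move=> hk; rewrite ffunE eqxx inordK. Qed.

Lemma mv_o (p : pt) j k o : o != j -> mv p j k o = p o.
Proof. by move=> ho; rewrite ffunE (negbTE ho). Qed.

Lemma extE (c : 'I_n.+2) : extreme c = ~~ ((1 <= c) && (c <= n))%N.
Proof. rewrite /extreme; case: c => k hk /=; case: k hk => [|k] hk //=.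
by rewrite eqSS -ltnNge ltnS eqn_leq; rewrite !ltnS in hk; rewrite hk. Qed.

Lemma inDP (p : pt) : reflect (forall j, (1 <= p j)%N /\ (p j <= n)%N) (inD p).
Proof.
apply: (iffP forallP) => h j; first by have := h j; rewrite extE negbK => /andP.
by rewrite extE negbK; have [-> ->] := h j.
Qed.

Lemma single_ext (p : pt) j : (forall o, o != j -> ~~ extreme (p o)) ->
  [set o | extreme (p o)] = if extreme (p j) then [set j] else set0.
Proof.
move=> h; apply/setP => o; rewrite inE.
case: (eqVneq o j) => [->|ho]; first by case: ifP => e; rewrite ?inE ?eqxx ?e.
by rewrite (negbTE (h o ho)); case: ifP; rewrite ?inE ?(negbTE ho).
Qed.

Lemma inD_single (p : pt) j : (forall o, o != j -> ~~ extreme (p o)) ->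
  inD p = ~~ extreme (p j).
Proof.
move=> h; apply/forallP/idP => [H|H o]; first exact: H.
by case: (eqVneq o j) => [->//|ho]; apply: h.
Qed.

Lemma inBd_single (p : pt) j : (forall o, o != j -> ~~ extreme (p o)) ->
  inBd p = extreme (p j).
Proof.
by move=> h; rewrite /inBd (single_ext h); case: ifP; rewrite ?cards1 ?cards0.
Qed.

Lemma inBdP (p : pt) : inBd p -> exists j, extreme (p j) /\ forall o, o != j -> ~~ extreme (p o).
Proof.
move/cards1P => [j hj]; exists j; split.
  have : j \in [set o | extreme (p o)] by rewrite hj inE.
  by rewrite inE.
move=> o ho; apply/negP => e.
have : o \in [set o | extreme (p o)] by rewrite inE. by rewrite hj inE (negbTE ho).
Qed.

Lemma inD_notBd (p : pt) : inD p -> ~~ inBd p.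
Proof.
move=> h; rewrite /inBd.
have -> : [set o | extreme (p o)] = set0.
  by apply/setP => o; rewrite !inE; move/forallP: h => /(_ o) /negbTE ->.
by rewrite cards0.
Qed.

Lemma l1_one (p : pt) q : l1dist p q = 1%N ->
  exists j, (forall o, o != j -> q o = p o) /\
            ((q j : nat) = (p j).+1 \/ (p j : nat) = (q j).+1).
Proof.
rewrite /l1dist => h.
have [j _ hj] : exists2 j, true & ((p j - q j) + (q j - p j) != 0)%N.
  apply/exists_inP; apply: contraT; rewrite negb_exists_in => /forall_inP H.
  move: h; rewrite big1 // => o _; by apply/eqP; rewrite -[_ == _]negbK H.
move: h; rewrite (bigD1 j) //= => h.
move: h hj; set S := bigop _ _ _; set a := nat_of_ord (p j); set b := nat_of_ord (q j) => h hj.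
have hr : (S = 0)%N by lia.
move/eqP: hr; rewrite /S; rewrite sum_nat_eq0 => /forall_inP hr.
exists j; split.
  move=> o ho; have := hr o ho; move/eqP => e; apply/val_inj => /=.
  move: e; set a1 := nat_of_ord (p o); set b1 := nat_of_ord (q o); lia.
lia.
Qed.

Lemma l1_mv (p : pt) j k : (k <= n.+1)%N -> l1dist p (mv p j k) = ((p j - k) + (k - p j))%N.
Proof.
move=> hk; rewrite /l1dist (bigD1 j) //= big1 ?addn0 ?mv_j //.
by move=> o ho; rewrite mv_o // subnn.
Qed.

Lemma ffun_eq (p q : pt) : (forall o, (p o : nat) = q o) -> p = q.
Proof. by move=> h; apply/ffunP => o; apply/val_inj/h. Qed.

End Basics.

Local Open Scope ring_scope.

Section Grid2.
Variables (d n : nat).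
Hypothesis hn : (0 < n)%N.
Local Notation pt := (pt d n).

Lemma edge_sym (p q : pt) : edge p q = edge q p.
Proof.
rewrite /edge /l1dist andbCA [inBd p && _]andbC; congr [&& _, _, _ & _].
by congr (_ == _); apply: eq_bigr => o _; rewrite addnC.
Qed.

Lemma edge_nb (p q : pt) : edge p q -> exists j, (forall o, o != j -> q o = p o) /\
            ((q j : nat) = (p j).+1 \/ (p j : nat) = (q j).+1).
Proof. by case/and4P => _ _ /eqP h _; apply: l1_one. Qed.

Lemma edge_mv (p : pt) j k : (forall o, o != j -> ~~ extreme (p o)) -> (k <= n.+1)%N ->
  ((p j - k) + (k - p j) = 1)%N -> edge p (mv p j k).
Proof.
move=> h hk hd.
have h' : forall o, o != j -> ~~ extreme (mv p j k o) by move=> o ho; rewrite mv_o // h.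
rewrite /edge; apply/and4P; split.
- by rewrite /inV (inD_single h) (inBd_single h); case: extreme.
- by rewrite /inV (inD_single h') (inBd_single h'); case: extreme.
- by rewrite l1_mv // hd.
rewrite (inBd_single h) (inBd_single h') !extE mv_j //.
move: hd; case: (p j) => a ha /=; lia.
Qed.

Lemma edge_V (p q : pt) : edge p q -> inV q.
Proof. by case/and4P. Qed.
Lemma edge_Vl (p q : pt) : edge p q -> inV p.
Proof. by case/and4P. Qed.

Lemma bd_nb_D (b t : pt) : inBd b -> edge b t -> inD t.
Proof.
move=> hb /and4P [_ ht _ hnb]; move: ht hnb; rewrite /inV hb /=.
by case: (inD t) => //= ->.
Qed.

Lemma bd_nb_uniq (b t1 t2 : pt) : inBd b -> edge b t1 -> edge b t2 -> t1 = t2.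
Proof.
move=> hb e1 e2; have [e [he ho]] := inBdP hb.
have key : forall t, edge b t -> (forall o, o != e -> t o = b o) /\
    (t e : nat) = (if (b e == 0 :> nat) then 1 else n)%N.
  move=> t et; have tD := bd_nb_D hb et.
  have [j [hj hj2]] := edge_nb et.
  have je : j = e.
    apply/eqP; apply: contraT => nje.
    move/forallP: tD => /(_ e); rewrite hj 1?eq_sym // he. by [].
  subst j; split => //.
  move/inDP: tD => /(_ e); move: he; rewrite /extreme.
  case: (t e) hj2 => a ha /=; case: (b e) => c hc /=; case: eqP => /= [->|]; lia.
have [k1 k2] := key _ e1; have [l1 l2] := key _ e2.
apply: ffun_eq => o; case: (eqVneq o e) => [->|oe]; first by rewrite k2 l2.
by rewrite k1 // l1.
Qed.

End Grid2.


Section Harm.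
Variables (d n : nat) (R : realType).
Hypothesis hn : (0 < n)%N.
Variable i0 : 'I_d.
Local Notation pt := (pt d n).
Variable g : pt -> pt -> R.
Hypothesis hg : conductivity g.

Lemma gpos (p q : pt) : edge p q -> 0 < g p q.
Proof. by case: hg => h _; apply: h. Qed.

Lemma lap_split (u : pt -> R) (s t : pt) : edge s t ->
  lap g u s = g s t * (u t - u s) + \sum_(r | edge s r && (r != t)) g s r * (u r - u s).
Proof. by move=> e; rewrite /lap (bigD1 t). Qed.

Lemma current_eq (u : pt -> R) (b t : pt) : inBd b -> edge b t ->
  current g u b = g b t * (u t - u b).
Proof.
move=> hb e; rewrite /current; case: pickP => [q hq|H]; last by have := H t; rewrite e.
by rewrite (bd_nb_uniq hn hb hq e).
Qed.

Lemma lapB (a b : pt -> R) s : lap g (fun x => a x - b x) s = lap g a s - lap g b s.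
Proof. by rewrite /lap -sumrB; apply: eq_bigr => q _; ring. Qed.

Lemma lapN (a : pt -> R) s : lap g (fun x => - a x) s = - lap g a s.
Proof. by rewrite /lap -sumrN; apply: eq_bigr => q _; ring. Qed.

Lemma harm_le0 (w : pt -> R) : (forall s, inD s -> lap g w s = 0) ->
  (forall b, inBd b -> w b = 0) -> forall t, inD t -> w t <= 0.
Proof.
move=> hw hb t tD; rewrite leNgt; apply/negP => wt.
have key : forall k (p : pt), inD p -> (forall q, inD q -> w q <= w p) -> 0 < w p ->
    (p i0 <= k)%N -> False.
  elim=> [|k IH] p pD pmax wp hk.
    by move/inDP: pD => /(_ i0) [h1 _]; move: h1 hk; case: (p i0) => a ha /=; lia.
  have pi1 : (1 <= p i0)%N by move/inDP: pD => /(_ i0) [].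
  set p' := mv p i0 (p i0).-1.
  have hint : forall o, o != i0 -> ~~ extreme (p o) by move=> o _; move/forallP: pD.
  have e : edge p p'.
    apply: edge_mv => //; first by rewrite ltnW // ltnS; case: (p i0) => a ha /=; lia.
    by move: pi1; case: (p i0) => a ha /=; lia.
  have terms : forall q, edge p q -> g p q * (w q - w p) = 0.
    have := hw p pD; rewrite /lap => h0.
    have : \sum_(q | edge p q) - (g p q * (w q - w p)) = 0 by rewrite sumrN h0 oppr0.
    have nn : forall q, edge p q -> 0 <= - (g p q * (w q - w p)).
      move=> q0 eq0; rewrite oppr_ge0; apply: mulr_ge0_le0; first exact/ltW/gpos.
      rewrite subr_le0; have := edge_V eq0; rewrite /inV; case/orP => [/pmax //|/hb ->].
      exact: ltW.
    move=> hs q eq; have := psumr_eq0P nn hs eq.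
    by move/eqP; rewrite oppr_eq0 => /eqP.
  have wp' : w p' = w p.
    have := terms p' e; move/eqP; rewrite mulf_eq0 (gt_eqF (gpos e)) /= subr_eq0.
    by move/eqP.
  have p'D : inD p'.
    have := edge_V e; rewrite /inV; case/orP => // /hb; rewrite wp' => h.
    by move: wp; rewrite h ltxx.
  apply: (IH p' p'D); rewrite ?wp' //.
  rewrite /p' mv_j; first by move: hk pi1; case: (p i0) => a ha /=; lia.
  by case: (p i0) => a ha /=; lia.
case: (@arg_maxP _ _ _ t (fun p => inD p) w tD) => p pD pmax.
apply: (key (p i0) p pD) => //.
by apply: lt_le_trans wt (pmax t tD).
Qed.

Lemma dirichlet_uniq (phi w1 w2 : pt -> R) : dirichlet_sol g phi w1 -> dirichlet_sol g phi w2 ->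
  forall t, inV t -> w1 t = w2 t.
Proof.
move=> [h1 b1] [h2 b2] t; rewrite /inV; case/orP => [tD|tB]; last by rewrite b1 // b2.
have hw : forall s, inD s -> lap g (fun x => w1 x - w2 x) s = 0.
  by move=> s sD; rewrite lapB h1 // h2 // subrr.
have hb : forall b, inBd b -> w1 b - w2 b = 0 by move=> b bB; rewrite b1 // b2 // subrr.
have le1 := harm_le0 hw hb tD.
have hw' : forall s, inD s -> lap g (fun x => - (w1 x - w2 x)) s = 0.
  by move=> s sD; rewrite lapN hw // oppr0.
have hb' : forall b, inBd b -> - (w1 b - w2 b) = 0 by move=> b bB; rewrite hb // oppr0.
have le2 := harm_le0 hw' hb' tD.
lra.
Qed.

End Harm.


Section Exist.
Variables (d n : nat) (R : realType).
Hypothesis hn : (0 < n)%N.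
Variable i0 : 'I_d.
Local Notation pt := (pt d n).
Variable g : pt -> pt -> R.
Hypothesis hg : conductivity g.

Local Notation N := #|{: pt}|.

Definition coef (t s : pt) : R :=
  if inD t then (if edge t s then g t s else 0) - (if s == t then \sum_(q | edge t q) g t q else 0)
  else (s == t)%:R.

Definition Amx : 'M[R]_N := \matrix_(j, k) coef (enum_val k) (enum_val j).

Definition fn (x : 'rV[R]_N) (s : pt) : R := x 0 (enum_rank s).

Lemma Amx_eq x t : (x *m Amx) 0 (enum_rank t) = if inD t then lap g (fn x) t else fn x t.
Proof.
rewrite !mxE.
have -> : \sum_j x 0 j * Amx j (enum_rank t) = \sum_s fn x s * coef t s.
  rewrite [RHS](big_enum_val (A := predT)) /=.
  apply: eq_bigr => j _; rewrite /fn enum_valK mxE enum_rankK.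
  by [].
set u := fn x; rewrite /coef; case: (inD t).
  under eq_bigr do rewrite mulrBr; rewrite sumrB.
  have E1 : \sum_s u s * (if edge t s then g t s else 0) = \sum_(s | edge t s) g t s * u s.
    by rewrite [RHS]big_mkcond; apply: eq_bigr => s _; case: ifP; rewrite ?mulr0 // mulrC.
  have E2 : \sum_s u s * (if s == t then \sum_(q | edge t q) g t q else 0) =
      u t * \sum_(q | edge t q) g t q.
    rewrite (bigD1 t) //= eqxx [X in _ + X = _]big1 ?addr0 // => s /negbTE ->.
    by rewrite mulr0.
  rewrite E1 E2 /lap mulr_sumr -sumrB; apply: eq_bigr => q _; ring.
rewrite (bigD1 t) //= eqxx mulr1 big1 ?addr0 // => s /negbTE ->.
by rewrite mulr0.
Qed.

Lemma fnK x : fn x =1 fn x.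
Proof. by []. Qed.

Lemma dirichlet_exists (phi : pt -> R) : exists w, dirichlet_sol g phi w.
Proof.
have inj : forall x : 'rV[R]_N, x *m Amx = 0 -> x = 0.
  move=> x hx.
  have hw : forall s, inD s -> lap g (fn x) s = 0.
    by move=> s sD; have := Amx_eq x s; rewrite sD hx mxE.
  have h0 : forall s, ~~ inD s -> fn x s = 0.
    by move=> s sD; have := Amx_eq x s; rewrite (negbTE sD) hx mxE.
  have hb : forall b, inBd b -> fn x b = 0.
    by move=> b bB; apply: h0; apply: contraTN bB => /inD_notBd.
  have hwN : forall s, inD s -> lap g (fun y => - fn x y) s = 0.
    by move=> s sD; rewrite lapN // hw // oppr0.
  have hbN : forall b, inBd b -> - fn x b = 0 by move=> b /hb ->; rewrite oppr0.
  apply/rowP => j; rewrite mxE.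
  have -> : x 0 j = fn x (enum_val j) by rewrite /fn enum_valK.
  case sD : (inD (enum_val j)); last by rewrite h0 ?sD.
  have := harm_le0 hn i0 hg hw hb sD; have := harm_le0 hn i0 hg hwN hbN sD. lra.
have rf : row_free Amx.
  rewrite -kermx_eq0; apply/eqP/row_matrixP => j; rewrite row0.
  by apply: inj; apply/sub_kermxP; apply: row_sub.
have uA : Amx \in unitmx by rewrite -row_free_unit.
set y : 'rV[R]_N := \row_k (if inD (enum_val k) then 0 else phi (enum_val k)).
set x := y *m invmx Amx.
have hx : x *m Amx = y by rewrite /x -mulmxA mulVmx // mulmx1.
exists (fn x); split.
  by move=> s sD; have := Amx_eq x s; rewrite sD hx mxE enum_rankK sD.
move=> b bB; have := Amx_eq x b; rewrite hx mxE enum_rankK.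
have -> : inD b = false by apply/negbTE; apply: contraTN bB => /inD_notBd.
by [].
Qed.

End Exist.

Section SolFacts.
Variables (d n : nat) (R : realType).
Hypothesis hn : (0 < n)%N.
Variable i0 : 'I_d.
Local Notation pt := (pt d n).
Variable g : pt -> pt -> R.
Hypothesis hg : conductivity g.

Lemma sol_spec (phi : pt -> R) : dirichlet_sol g phi (Sol g phi).
Proof. by rewrite /Sol; apply: epsilon_spec; apply: (dirichlet_exists hn i0 hg). Qed.

Lemma sol_eq (phi w : pt -> R) : dirichlet_sol g phi w -> forall t, inV t -> Sol g phi t = w t.
Proof. by move=> hw; apply: (dirichlet_uniq hn i0 hg (sol_spec phi) hw). Qed.

End SolFacts.


Section Propag.
Variables (d n : nat) (R : realType).
Hypothesis hn : (0 < n)%N.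
Local Notation pt := (pt d n).
Variable g : pt -> pt -> R.
Hypothesis hg : conductivity g.
Variables i v : 'I_d.
Hypothesis iv : i != v.

Inductive nb5_spec (s r : pt) : Prop :=
 | NB1 of (r i : nat) = (s i).+1 & (forall o, o != i -> r o = s o)
 | NB2 of (s i : nat) = (r i).+1 & (r v : nat) = s v
 | NB3 of (r v : nat) = (s v).+1 & (r i : nat) = s i
 | NB4 of (s v : nat) = (r v).+1 & (forall o, o != v -> r o = s o)
 | NB5 of (r i : nat) = s i & (r v : nat) = s v.

Lemma nb5 (s r : pt) : edge s r -> nb5_spec s r.
Proof.
move=> e; have [j [hj [h|h]]] := edge_nb e.
- case: (eqVneq j i) => [ji|ji]; first by subst j; constructor 1.
  case: (eqVneq j v) => [jv|jv]; first by subst j; constructor 3 => //; rewrite hj.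
  by constructor 5; rewrite hj // eq_sym.
- case: (eqVneq j i) => [ji|ji]; first by subst j; constructor 2 => //; rewrite hj // eq_sym.
  case: (eqVneq j v) => [jv|jv]; first by subst j; constructor 4.
  by constructor 5; rewrite hj // eq_sym.
Qed.

Definition propd (t : pt) := (0 < t i)%N && inD (mv t i (t i).-1).

Variable beta : pt -> R.

Definition pstep (U : pt -> R) (k : nat) (t : pt) : R :=
  if ((t i : nat) == k.+1) && inD (mv t i k) then
    U (mv t i k) - (\sum_(r | edge (mv t i k) r && (r != t))
                      g (mv t i k) r * (U r - U (mv t i k))) / g (mv t i k) t
  else U t.

Fixpoint propU k := if k is k'.+1 then pstep (propU k') k' else beta.
Definition prp := propU n.+1.

Lemma propU_stable k k' (t : pt) : (t i <= k)%N -> (k <= k')%N -> propU k' t = propU k t.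
Proof.
move=> hti; elim: k' => [|k' IH] hk.
  by have -> : k = 0%N by lia.
case: (eqVneq k k'.+1) => [->//|nk].
rewrite /= /pstep; have -> : ((t i : nat) == k'.+1) = false by apply/eqP; lia.
by rewrite /= IH //; lia.
Qed.

Lemma prp_nonprop (t : pt) : ~~ propd t -> prp t = beta t.
Proof.
move=> np; rewrite /prp; elim: n.+1 => [//|k IH] /=; rewrite /pstep.
case: ifP => // /andP [/eqP e hD]; move: np; rewrite /propd e /= hD.
by [].
Qed.

Lemma ordle (c : 'I_n.+2) : (c <= n.+1)%N.
Proof. by rewrite -ltnS ltn_ord. Qed.

Lemma mv_mv (t : pt) j a : (a <= n.+1)%N -> mv (mv t j a) j (t j) = t.
Proof.
move=> ha; apply: ffun_eq => o; case: (eqVneq o j) => [->|oj]; first by rewrite mv_j // ordle.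
by rewrite !mv_o.
Qed.

Lemma edge_down (t : pt) : propd t -> edge (mv t i (t i).-1) t.
Proof.
case/andP => h0 hD; set s := mv t i (t i).-1.
have hs : ((t i).-1 <= n.+1)%N by case: (t i) => a ha /=; lia.
have e : t = mv s i (s i).+1.
  rewrite /s mv_j //; have -> : ((t i).-1).+1 = t i by lia.
  by rewrite mv_mv.
rewrite [X in edge _ X]e; apply: (edge_mv hn).
- by move=> o _; move/forallP: hD.
- by rewrite /s mv_j //; case: (t i) h0 => a ha /=; lia.
- by rewrite /s mv_j //; lia.
Qed.

Lemma prp_harm (s : pt) : inD s -> lap g prp s = 0.
Proof.
move=> sD; set k := nat_of_ord (s i).
have k1 : (1 <= k <= n)%N by move/inDP: sD => /(_ i) [] -> ->.
set t := mv s i k.+1.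
have ti : (t i : nat) = k.+1 by rewrite /t mv_j //; lia.
have ts : mv t i k = s by rewrite /t /k mv_mv //; lia.
have tp : propd t by rewrite /propd ti /= ts.
have e : edge s t by move: (edge_down tp); rewrite ti /= ts.
have rle : forall r, edge s r && (r != t) -> (r i <= k)%N.
  move=> r /andP [er rt]; case: (nb5 er) => [[h1 h2]|[h1 _]|[_ h1]|[_ h2]|[h1 _]]; try lia.
  - move: rt; suff -> : r = t by rewrite eqxx.
    apply: ffun_eq => o; case: (eqVneq o i) => [->|oi]; first by rewrite ti h1.
    by rewrite h2 // /t mv_o.
  - case: (eqVneq i v) iv => // _ _; by rewrite h2 // eq_sym.
have pt_eq : prp t = prp s - (\sum_(r | edge s r && (r != t)) g s r * (prp r - prp s)) / g s t.
  have E1 : prp t = propU k.+1 t.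
    by rewrite /prp (@propU_stable k.+1 n.+1 t) ?ti //; lia.
  rewrite E1 [propU k.+1 t]/= /pstep ti eqxx ts sD /=.
  have E2 : propU k s = prp s by rewrite /prp (@propU_stable k n.+1 s) //; lia.
  rewrite E2; congr (_ - _ / _); apply: eq_bigr => r hr.
  by rewrite /prp (@propU_stable k n.+1 r) ?rle //; lia.
rewrite (lap_split _ _ e) pt_eq.
have gne : g s t != 0 by rewrite gt_eqF // (gpos hg e).
by field.
Qed.


Variable b : pt.
Definition inH (t : pt) := (t i + b v < t v + b i)%N.

Lemma Z0 (w : pt -> R) : (forall s, inD s -> lap g w s = 0) ->
  (forall t, inV t -> inH t -> ~~ propd t -> w t = 0) -> forall t, inV t -> inH t -> w t = 0.
Proof.
move=> hw h0.
suff H : forall k (t : pt), (t i <= k)%N -> inV t -> inH t -> w t = 0.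
  by move=> t; apply: (H (t i)).
elim=> [|k IH] t hk tV tH; case tp : (propd t); try (by apply: h0; rewrite ?tp).
  by move: tp; rewrite /propd => /andP [h _]; lia.
have e := edge_down tp; set s := mv t i (t i).-1 in e.
have sD : inD s by case/andP: tp.
have si : (s i : nat) = (t i).-1 by rewrite mv_j //; case: (t i) => a ha /=; lia.
have sv : s v = t v by rewrite mv_o // eq_sym.
have t0 : (0 < t i)%N by case/andP: tp.
have ws : w s = 0.
  apply: IH; rewrite ?si; try lia; first by rewrite /inV sD.
  by rewrite /inH si sv; move: tH; rewrite /inH; lia.
have := hw s sD; rewrite (lap_split _ _ e) big1 ?addr0.
  rewrite ws subr0 => /eqP; rewrite mulf_eq0 (gt_eqF (gpos hg e)) /=; by move/eqP.
move=> r /andP [er rt]; rewrite ws subr0.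
have -> : w r = 0; last by rewrite mulr0.
have rV := edge_V er.
case: (nb5 er) => [h1 h2|h1 h2|h1 h2|h1 h2|h1 h2].
- move: rt; suff -> : r = t by rewrite eqxx.
  apply: ffun_eq => o; case: (eqVneq o i) => [->|oi]; first by rewrite h1 si; lia.
  by rewrite h2 // mv_o.
- apply: IH => //; first by lia.
  by move: tH; rewrite /inH h2 sv; lia.
- apply: IH => //; first by lia.
  by move: tH; rewrite /inH h1 h2 sv si; lia.
- have h3 := h2 i iv.
  apply: IH => //; first by rewrite h3 si; lia.
  by move: tH h1; rewrite /inH h3 si sv; lia.
- apply: IH => //; first by lia.
  by move: tH; rewrite /inH h1 h2 si sv; lia.
Qed.

End Propag.


Section Special.
Variables (d n : nat) (R : realType).
Hypothesis hn : (0 < n)%N.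
Local Notation pt := (pt d n).
Variable g : pt -> pt -> R.
Hypothesis hg : conductivity g.
Variables i v : 'I_d.
Hypothesis iv : i != v.
Variable b : pt.
Hypothesis hbo : forall o, o != i -> o != v -> ~~ extreme (b o).
Hypothesis hbi : (1 <= b i)%N.
Hypothesis hbv : (b v <= n)%N.
Hypothesis hcor : (b v : nat) = 0%N -> (b i <= n)%N.

Let j0 := minn (b i).-1 (b v).
Let zi := (b i - j0)%N.
Let zv := (b v - j0)%N.
Let y k := mv (mv b i (zi + k)) v (zv + k).
Let z := y 0.

Lemma bi_le : (b i <= n.+1)%N. Proof. by rewrite ordle. Qed.

Lemma y_i k : (k <= j0)%N -> (y k i : nat) = (zi + k)%N.
Proof. move=> hk; rewrite /y mv_o // mv_j //; have := bi_le; rewrite /zi /j0; lia. Qed.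
Lemma y_v k : (k <= j0)%N -> (y k v : nat) = (zv + k)%N.
Proof. move=> hk; rewrite /y mv_j //; rewrite /zv /j0; lia. Qed.
Lemma y_o k o : o != i -> o != v -> y k o = b o.
Proof. by move=> oi ov; rewrite /y !mv_o. Qed.

Let beta := fun t : pt => (t == z)%:R : R.
Let u := prp g i beta.

Lemma u_harm s : inD s -> lap g u s = 0.
Proof. move=> sD; rewrite /u; exact: (prp_harm hn hg iv beta sD). Qed.

Lemma z_notH : ~~ inH i v b z.
Proof. rewrite /inH y_i // y_v // /zi /zv /j0; have := bi_le; lia. Qed.

Lemma u_H t : inV t -> inH i v b t -> u t = 0.
Proof.
apply: (Z0 hn hg iv) => //; first exact: u_harm.
move=> t0 _ tH np; rewrite /u prp_nonprop // /beta.
case: eqP => // e; move: tH; rewrite e; by rewrite (negbTE z_notH).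
Qed.

Lemma u_front k : (k <= j0)%N -> u (y k) != 0.
Proof.
elim: k => [|k IH] hk.
  rewrite /u prp_nonprop /beta ?eqxx ?oner_eq0 //.
  rewrite /propd negb_and; apply/orP; right; apply/negP => /inDP H.
  have : (zv = 0)%N \/ (zi = 1)%N by rewrite /zv /zi /j0; lia.
  case => [h0|h1].
    have := H v; rewrite mv_o 1?eq_sym // y_v //; lia.
  have := H i; rewrite mv_j ?y_i //; first lia.
  by have := bi_le; rewrite /zi /j0; lia.
have hk' : (k <= j0)%N by lia.
have IHk := IH hk'.
have ar : (zi + j0 = b i /\ zv + j0 = b v /\ zi + b v = zv + b i /\ 1 <= zi)%N.
  by have := bi_le; rewrite /zi /zv /j0; lia.
case: ar => [a1 [a2 [a3 a4]]].
set t := y k.+1; set s := mv t i (t i).-1.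
have ti : (t i : nat) = (zi + k.+1)%N by apply: y_i.
have tv : (t v : nat) = (zv + k.+1)%N by apply: y_v.
have bl := bi_le.
have si : (s i : nat) = (zi + k)%N by rewrite /s mv_j; [rewrite ti; lia | rewrite ti; lia].
have sv : s v = t v by rewrite /s mv_o // eq_sym.
have so : forall o, o != i -> o != v -> s o = b o.
  by move=> o oi ov; rewrite /s mv_o // /t y_o.
have sD : inD s.
  apply/inDP => o; case: (eqVneq o i) => [->|oi]; first by rewrite si; lia.
  case: (eqVneq o v) => [->|ov]; first by rewrite sv tv; lia.
  by rewrite so //; have := hbo oi ov; rewrite extE negbK => /andP.
have tp : propd i t by rewrite /propd; apply/andP; split; [rewrite ti; lia | exact: sD].
have e : edge s t := edge_down hn iv tp.
have yk : y k = mv s v (s v).-1.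
  apply: ffun_eq => o; case: (eqVneq o v) => [->|ov].
    rewrite mv_j; have := y_v hk'; rewrite ?sv ?tv; lia.
  rewrite mv_o //; case: (eqVneq o i) => [->|oi]; first by rewrite si y_i.
  by rewrite so // y_o.
have e2 : edge s (y k).
  rewrite yk; apply: (edge_mv hn).
  - by move=> o _; move/forallP: sD.
  - by rewrite sv tv; lia.
  - by rewrite sv tv; lia.
have ne : y k != t.
  apply/negP => /eqP H; have := congr1 (fun p : pt => nat_of_ord (p v)) H => /= hh.
  have := y_v hk'; lia.
have sH : inH i v b s by rewrite /inH si sv tv; lia.
have us : u s = 0 by apply: u_H => //; rewrite /inV sD.
have := u_harm sD; rewrite (lap_split _ _ e) (bigD1 (y k)) /=; last by rewrite e2 ne.
rewrite big1 ?addr0; last first.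
  move=> r /andP [/andP [er rt] ry]; rewrite us subr0.
  suff -> : u r = 0 by rewrite mulr0.
  apply: u_H; first exact: edge_V er.
  case: (nb5 iv er) => [h1 h2|h1 h2|h1 h2|h1 h2|h1 h2].
  - move: rt; suff -> : r = t by rewrite eqxx.
    apply: ffun_eq => o; case: (eqVneq o i) => [->|oi]; first by rewrite h1 si ti; lia.
    by rewrite h2 // /s mv_o.
  - by rewrite /inH h2 sv tv; lia.
  - by rewrite /inH h1 h2 si sv tv; lia.
  - move: ry; suff -> : r = y k by rewrite eqxx.
    rewrite yk; apply: ffun_eq => o; case: (eqVneq o v) => [->|ov].
      rewrite mv_j; first by rewrite h1.
      by have := ordle (s v); lia.
    by rewrite mv_o // h2.
  - by rewrite /inH h1 h2 si sv tv; lia.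
rewrite us !subr0 => H; apply/eqP => ut; move: H; rewrite ut mulr0 add0r.
move/eqP; rewrite mulf_eq0 (negbTE IHk) orbF (gt_eqF (gpos hg e2)).
by [].
Qed.

Lemma yj0 : y j0 = b.
Proof.
apply: ffun_eq => o; case: (eqVneq o v) => [->|ov]; first by rewrite y_v //; rewrite /zv /j0; lia.
case: (eqVneq o i) => [->|oi]; first by rewrite y_i //; have := bi_le; rewrite /zi /j0; lia.
by rewrite y_o.
Qed.

Lemma special : exists w : pt -> R, [/\ forall s, inD s -> lap g w s = 0,
   forall t, inV t -> inH i v b t -> w t = 0 & w b != 0].
Proof.
exists u; split; [exact: u_harm | exact: u_H |].
by rewrite -yj0; apply: u_front.
Qed.

End Special.


Section Main.
Variables (d n : nat) (R : realType).
Hypothesis hd : (2 <= d)%N.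
Hypothesis hn : (1 <= n)%N.
Local Notation pt := (pt d n).
Variables g g' : pt -> pt -> R.
Hypothesis hg : conductivity g.
Hypothesis hg' : conductivity g'.
Hypothesis hL : forall (phi : pt -> R) (b : pt), inBd b -> DtN g phi b = DtN g' phi b.

Variables v i0 : 'I_d.
Hypothesis i0v : i0 != v.

Let S := Sol g.
Let S' := Sol g'.

Lemma dtn_eq phi b t : inBd b -> edge b t ->
  g b t * (S phi t - S phi b) = g' b t * (S' phi t - S' phi b).
Proof.
by move=> hb e; have := hL phi hb; rewrite /DtN (current_eq hn _ _ hb e) (current_eq hn _ _ hb e).
Qed.

Lemma S_bd phi b : inBd b -> S phi b = phi b.
Proof. by move=> hb; have [_ h] := sol_spec hn i0 hg phi; apply: h. Qed.
Lemma S'_bd phi b : inBd b -> S' phi b = phi b.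
Proof. by move=> hb; have [_ h] := sol_spec hn i0 hg' phi; apply: h. Qed.
Lemma S_harm phi s : inD s -> lap g (S phi) s = 0.
Proof. by move=> hs; have [h _] := sol_spec hn i0 hg phi; apply: h. Qed.
Lemma S'_harm phi s : inD s -> lap g' (S' phi) s = 0.
Proof. by move=> hs; have [h _] := sol_spec hn i0 hg' phi; apply: h. Qed.

Lemma nb_up (j : 'I_d) (s t r : pt) : (forall o, o != j -> t o = s o) ->
  (t j : nat) = (s j).+1 -> edge s r -> (s j < r j)%N -> r = t.
Proof.
move=> ht tj e lt; have [j' [hj h]] := edge_nb e.
case: (eqVneq j' j) => [ejj|njj]; last by move: lt; rewrite hj ?ltnn // eq_sym.
subst j'; apply: ffun_eq => o; case: (eqVneq o j) => [->|oj]; first by rewrite tj; lia.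
by rewrite hj // ht.
Qed.

Lemma nb_le (j : 'I_d) (s r : pt) : edge s r -> (r j <= (s j).+1)%N /\ (s j <= (r j).+1)%N.
Proof.
move=> e; have [j' [hj h]] := edge_nb e.
case: (eqVneq j j') => [->|jj]; first by lia.
by rewrite hj //; lia.
Qed.

Lemma edge_same_int (p q : pt) o : edge p q -> p o = q o -> ~~ extreme (p o).
Proof.
move=> /and4P [pV qV _ nb] e; apply/negP => ex; move: nb.
have pB : inBd p.
  move: pV; rewrite /inV; case/orP => // /forallP /(_ o); by rewrite ex.
have qB : inBd q.
  move: qV; rewrite /inV; case/orP => // /forallP /(_ o); by rewrite -e ex.
by rewrite pB qB.
Qed.


Lemma transfer (i : 'I_d) (iv : i != v) (b : pt) (w : pt -> R) :
  (forall s, inD s -> lap g w s = 0) -> (forall t, inV t -> inH i v b t -> w t = 0) ->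
  forall t, inV t -> inH i v b t -> S' w t = 0.
Proof.
move=> hw hz.
have Sw : forall t, inV t -> S w t = w t.
  by move=> t tV; apply: (sol_eq hn i0 hg) => //; split.
apply: (Z0 hn hg' iv); first exact: S'_harm.
move=> t tV tH np; case/orP: tV => [tD|tB]; last by rewrite S'_bd // hz // /inV tB orbT.
have ti : (t i : nat) = 1%N.
  move: np; rewrite /propd negb_and => /orP [|nD].
    by move/inDP: tD => /(_ i) [h _]; lia.
  move/inDP: (tD) => /(_ i) [h1 h2]; apply/eqP; apply: contraNT nD => ne.
  apply/inDP => o; case: (eqVneq o i) => [->|oi].
    by rewrite mv_j; lia.
  by rewrite mv_o //; move/inDP: tD.
set s' := mv t i 0.
have hint : forall o, o != i -> ~~ extreme (t o) by move=> o _; move/forallP: tD.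
have e : edge s' t.
  rewrite edge_sym; apply: (edge_mv hn) => //; lia.
have hint' : forall o, o != i -> ~~ extreme (s' o) by move=> o oi; rewrite mv_o // hint.
have sB : inBd s' by rewrite (inBd_single hint') extE mv_j.
have sH : inH i v b s' by move: tH; rewrite /inH mv_j // mv_o 1?eq_sym //; lia.
have := dtn_eq w sB e.
rewrite Sw ?(edge_V e) // Sw ?(edge_Vl e) // hz ?(edge_V e) // hz ?(edge_Vl e) //.
rewrite (S'_bd w sB) hz ?(edge_Vl e) // !subr0 mulr0 => /esym /eqP.
by rewrite mulf_eq0 (gt_eqF (gpos hg' e)) /= => /eqP.
Qed.

Definition KB m := forall p q : pt, edge p q -> (p v < m)%N -> g p q = g' p q.

Lemma LL m : KB m -> forall phi t, inV t -> (t v <= m)%N -> S phi t = S' phi t.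
Proof.
move=> hk phi.
suff H : forall k (t : pt), (t v <= k)%N -> (k <= m)%N -> inV t -> S phi t = S' phi t.
  by move=> t tV tm; apply: (H (t v)).
elim=> [|k IH] t tk km tV; case/orP: tV => [tD|tB]; try by rewrite S_bd // S'_bd.
  by move/inDP: tD => /(_ v) [h _]; lia.
have tv1 : (1 <= t v)%N by move/inDP: tD => /(_ v) [].
set s := mv t v (t v).-1.
have hint : forall o, o != v -> ~~ extreme (t o) by move=> o _; move/forallP: tD.
have e : edge s t.
  rewrite edge_sym; apply: (edge_mv hn) => //; first by have := ordle (t v); lia.
  lia.
have sv : (s v : nat) = (t v).-1 by rewrite mv_j //; have := ordle (t v); lia.
have so : forall o, o != v -> t o = s o by move=> o ov; rewrite mv_o.
have tsv : (t v : nat) = (s v).+1 by lia.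
have kst : g s t = g' s t by apply: hk => //; lia.
have Ss : S phi s = S' phi s by apply: IH => //; [lia | lia | exact: edge_Vl e].
have [tv_eq1|tv_gt1] := eqVneq (t v : nat) 1%N.
  have hint' : forall o, o != v -> ~~ extreme (s o) by move=> o ov; rewrite mv_o // hint.
  have sB : inBd s by rewrite (inBd_single hint') extE sv tv_eq1.
  have := dtn_eq phi sB e; rewrite kst Ss => /eqP.
  rewrite -subr_eq0 -mulrBr mulf_eq0 (gt_eqF (gpos hg' e)) /= subr_eq0.
  by rewrite (addrC (S phi t)) (addrC (S' phi t)) => /eqP/addrI.
have sD : inD s.
  apply/inDP => o; case: (eqVneq o v) => [->|ov]; first by rewrite sv; move/eqP: tv_gt1; move/inDP: (tD) => /(_ v) [_ hh]; lia.
  by rewrite mv_o //; move/inDP: tD.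
have h1 := S_harm phi sD; have h2 := S'_harm phi sD.
have sk : (s v <= k)%N by rewrite sv; lia.
move: h1 h2; rewrite (lap_split _ _ e) (lap_split _ _ e).
have -> : \sum_(r | edge s r && (r != t)) g' s r * (S' phi r - S' phi s) =
          \sum_(r | edge s r && (r != t)) g s r * (S phi r - S phi s).
  apply: eq_bigr => r /andP [er rt].
  have rv : (r v <= s v)%N.
    rewrite leqNgt; apply/negP => lt; move: rt; by rewrite (nb_up so tsv er lt) eqxx.
  have Sr : S phi r = S' phi r.
    by apply: IH; [exact: leq_trans rv sk | exact: ltnW | exact: edge_V er].
  have gr : g s r = g' s r by apply: hk => //; rewrite sv; lia.
  by rewrite Ss Sr gr.
set X := \sum_(r | _) _.
move=> h1 h2.
have : g s t * (S phi t - S' phi t) =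
   (g s t * (S phi t - S phi s) + X) - (g' s t * (S' phi t - S' phi s) + X).
  by rewrite -kst -Ss; ring.
rewrite h1 h2 subrr => /eqP; rewrite mulf_eq0 (gt_eqF (gpos hg e)) /= subr_eq0.
by move/eqP.
Qed.


Definition KA m := forall p q : pt, edge p q -> (p v <= m)%N -> (q v <= m)%N -> g p q = g' p q.

Lemma KA_KB m : KA m -> KB m.
Proof. by move=> h p q e pm; apply: h => //; [lia | have := nb_le v e; lia]. Qed.

Lemma gsym (p q : pt) : edge p q -> g p q = g q p.
Proof. by case: hg => _ h; apply: h. Qed.
Lemma gsym' (p q : pt) : edge p q -> g' p q = g' q p.
Proof. by case: hg' => _ h; apply: h. Qed.

Lemma vert m : KA m -> (m <= n)%N -> forall p q : pt, edge p q ->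
  (p v : nat) = m -> (q v : nat) = m.+1 -> g p q = g' p q.
Proof.
move=> hA mn p q e pv qv.
have [j [hj hj2]] := edge_nb e.
have jv : j = v.
  apply/eqP; apply: contraT => jv; move: qv; rewrite hj 1?eq_sym // pv; lia.
subst j.
have hint : forall o, o != v -> ~~ extreme (p o).
  by move=> o ov; apply: (edge_same_int e); rewrite hj.
have hbi : (1 <= p i0)%N by have := hint i0 i0v; rewrite extE negbK => /andP [].
have [w [hw hz wb]] := special hn hg i0v (b := p)
  (fun o oi ov => hint o ov) hbi (ltac:(lia)) (fun _ => ltac:(by have := hint i0 i0v; rewrite extE negbK => /andP [])).
have qH : inH i0 v p q by rewrite /inH hj // qv pv; lia.
have Sw : forall t, inV t -> S w t = w t.
  by move=> t tV; apply: (sol_eq hn i0 hg) => //; split.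
have Sq : S w q = 0 by rewrite Sw ?(edge_V e) // hz // (edge_V e).
have S'q : S' w q = 0 by apply: (transfer i0v hw hz) => //; exact: edge_V e.
have Sp : S w p = w p by rewrite Sw // (edge_Vl e).
case: (posnP m) => [m0|mpos].
  have pB : inBd p by rewrite (inBd_single hint) extE pv m0.
  have := dtn_eq w pB e; rewrite Sq S'q Sp S'_bd // !sub0r !mulrN => /eqP.
  rewrite eqr_opp -subr_eq0 -mulrBl mulf_eq0 (negbTE wb) orbF subr_eq0.
  by move/eqP.
have pD : inD p by rewrite (inD_single hint) extE pv negbK mpos.
have hB := KA_KB hA.
have Sp' : S w p = S' w p by apply: (LL hB) => //; [exact: edge_Vl e | lia].
have h1 := S_harm w pD; have h2 := S'_harm w pD.
move: h1 h2; rewrite (lap_split _ _ e) (lap_split _ _ e).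
have tsv : (q v : nat) = (p v).+1 by lia.
have -> : \sum_(r | edge p r && (r != q)) g' p r * (S' w r - S' w p) =
          \sum_(r | edge p r && (r != q)) g p r * (S w r - S w p).
  apply: eq_bigr => r /andP [er rq].
  have rv : (r v <= p v)%N.
    rewrite leqNgt; apply/negP => lt.
    by move: rq; rewrite (nb_up (fun o ov => hj o ov) tsv er lt) eqxx.
  have rm : (r v <= m)%N by rewrite -pv.
  have Sr : S w r = S' w r by apply: (LL hB); [exact: edge_V er | exact: rm].
  have gr : g p r = g' p r by apply: hA => //; rewrite pv.
  by rewrite Sp' Sr gr.
set X := \sum_(r | _) _.
move=> h1 h2.
have : (g p q - g' p q) * (0 - S w p) =
   (g p q * (S w q - S w p) + X) - (g' p q * (S' w q - S' w p) + X).
  by rewrite Sq S'q -Sp'; ring.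
rewrite h1 h2 subrr => /eqP; rewrite mulf_eq0 sub0r oppr_eq0 Sp (negbTE wb) orbF subr_eq0.
by move/eqP.
Qed.


Lemma horiz_dir m (l : 'I_d) : KB m.+1 -> (m.+1 <= n)%N -> l != v -> forall p r : pt, edge p r ->
  (p v : nat) = m.+1 -> (forall o, o != l -> r o = p o) -> (r l : nat) = (p l).+1 ->
  g p r = g' p r.
Proof.
move=> hB mn lv p r e pv hr rl.
have rv : (r v : nat) = m.+1 by rewrite hr 1?eq_sym.
have hint : forall o, o != l -> ~~ extreme (r o).
  by move=> o ol; rewrite hr //; apply: (edge_same_int e); rewrite hr.
have [w [hw hz wr]] := special hn hg lv (b := r)
  (fun o ol ov => hint o ol) (ltac:(lia)) (ltac:(lia)) (fun h => ltac:(lia)).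
have pH : inH l v r p by rewrite /inH rv rl pv; lia.
have Sw : forall t, inV t -> S w t = w t.
  by move=> t tV; apply: (sol_eq hn i0 hg) => //; split.
have Sp : S w p = 0 by rewrite Sw ?(edge_Vl e) // hz // (edge_Vl e).
have S'p : S' w p = 0 by apply: (transfer lv hw hz) => //; exact: edge_Vl e.
have Sr : S w r = S' w r by apply: (LL hB) => //; [exact: edge_V e | rewrite rv].
have Sr0 : S w r != 0 by rewrite Sw // (edge_V e).
case/orP: (edge_Vl e) => [pD|pB]; last first.
  have := dtn_eq w pB e; rewrite Sp S'p -Sr !subr0 => /eqP.
  rewrite -subr_eq0 -mulrBl mulf_eq0 (negbTE Sr0) orbF subr_eq0.
  by move/eqP.
have h1 := S_harm w pD; have h2 := S'_harm w pD.
move: h1 h2; rewrite (lap_split _ _ e) (lap_split _ _ e).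
have -> : \sum_(t | edge p t && (t != r)) g' p t * (S' w t - S' w p) =
          \sum_(t | edge p t && (t != r)) g p t * (S w t - S w p).
  apply: eq_bigr => t /andP [et tr].
  case: (leqP (t v) m) => tm.
    have ggt : g p t = g' p t.
      rewrite (gsym et) (gsym' et); apply: hB => //; by rewrite edge_sym.
    have St : S w t = S' w t by apply: (LL hB); [exact: edge_V et | exact: leqW tm].
    by rewrite Sp S'p ggt St.
  have tH : inH l v r t.
    case: (nb5 lv et) => [h1 h2|h1 h2|h1 h2|h1 h2|h1 h2].
    - move: tr; suff -> : t = r by rewrite eqxx.
      apply: ffun_eq => o; case: (eqVneq o l) => [->|ol]; first by rewrite h1 rl.
      by rewrite h2 // hr.
    - by rewrite /inH h2 rv rl pv; lia.
    - by rewrite /inH h1 h2 rv rl pv; lia.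
    - have tvm : (t v : nat) = m by apply: succn_inj; rewrite -h1 pv.
      by move: tm; rewrite tvm ltnn.
    - by rewrite /inH h1 h2 rv rl pv; lia.
  have St : S w t = 0 by rewrite Sw ?(edge_V et) // hz // (edge_V et).
  have S't : S' w t = 0 by apply: (transfer lv hw hz) => //; exact: edge_V et.
  by rewrite St S't Sp S'p !subrr !mulr0.
set X := \sum_(t | _) _.
move=> h1 h2.
have : (g p r - g' p r) * S w r =
   (g p r * (S w r - S w p) + X) - (g' p r * (S' w r - S' w p) + X).
  by rewrite Sp S'p -Sr; ring.
rewrite h1 h2 subrr => /eqP; rewrite mulf_eq0 (negbTE Sr0) orbF subr_eq0.
by move/eqP.
Qed.


Lemma horiz m : KB m.+1 -> (m.+1 <= n)%N -> forall p q : pt, edge p q ->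
  (p v : nat) = m.+1 -> (q v : nat) = m.+1 -> g p q = g' p q.
Proof.
move=> hB mn p q e pv qv.
have [j [hj [hq|hp]]] := edge_nb e.
- have jv : j != v by apply/eqP => jv; move: hq; rewrite jv pv qv; lia.
  exact: (horiz_dir hB mn jv e pv hj hq).
- have jv : j != v by apply/eqP => jv; move: hp; rewrite jv pv qv; lia.
  have e' : edge q p by rewrite edge_sym.
  have hj' : forall o, o != j -> p o = q o by move=> o oj; rewrite hj.
  rewrite (gsym e) (gsym' e); exact: (horiz_dir hB mn jv e' qv hj' hp).
Qed.

Lemma KA0 : KA 0.
Proof.
move=> p q e p0 q0; exfalso.
have hpq : p v = q v by apply: val_inj => /=; lia.
by move: (edge_same_int e hpq); rewrite extE; lia.
Qed.

Lemma KA_step m : (m <= n)%N -> KA m -> KA m.+1.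
Proof.
move=> mn hA.
have hV := vert hA mn.
have hB : KB m.+1.
  move=> p q e; rewrite ltnS => pm.
  case: (leqP (q v) m) => qm; first by apply: hA.
  have := nb_le v e => -[h1 h2].
  by apply: hV => //; lia.
move=> p q e pm qm.
case: (leqP (p v) m) => pm'; first by apply: hB => //; rewrite ltnS.
case: (leqP (q v) m) => qm'.
  by rewrite (gsym e) (gsym' e); apply: hB; rewrite ?ltnS // edge_sym.
have pv : (p v : nat) = m.+1 by apply/eqP; rewrite eqn_leq pm pm'.
have qv : (q v : nat) = m.+1 by apply/eqP; rewrite eqn_leq qm qm'.
case: (leqP m.+1 n) => mn'; first exact: (horiz hB mn' e pv qv).
exfalso; have hpq : p v = q v by apply: val_inj => /=; rewrite pv qv.
by move: (edge_same_int e hpq); rewrite extE pv; lia.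
Qed.

Lemma KA_all : KA n.+1.
Proof.
have : forall m, (m <= n.+1)%N -> KA m.
  elim=> [|m IH] hm; first exact: KA0.
  by apply: KA_step; [lia | apply: IH; lia].
by move/(_ n.+1 (leqnn _)).
Qed.

Lemma main_result (p q : pt) : edge p q -> g p q = g' p q.
Proof. by move=> e; apply: KA_all => //; apply: ordle. Qed.

End Main.


Unset Implicit Arguments.
Theorem theorem1p1 (R : realType) (d n : nat) (hd : (2 <= d)%N) (hn : (1 <= n)%N)
  (g g' : pt d n -> pt d n -> R)
  (hg : conductivity g) (hg' : conductivity g')
  (hL : forall (phi : pt d n -> R) (b : pt d n),
          inBd b -> DtN g phi b = DtN g' phi b) :
  forall p q : pt d n, edge p q -> g p q = g' p q.
Proof.
have d0 : (0 < d)%N by apply: leq_trans hd.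
pose v : 'I_d := Ordinal d0.
pose i0 : 'I_d := Ordinal hd.
have i0v : i0 != v by [].
move=> p q e; exact: (main_result hd hn hg hg' hL i0v e).
Qed.
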